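(* Let $p,n$ be positive integers, $c=\gcd(p,n)$, $d=n/c$, $y\in\mathbb{Z}_n$, and let $\alpha_k$ ($0\le k\le c-1$) be defined by $\alpha_k(x_i)\equiv y+L(i-1)\,kd\pmod n$, $i=1,\dots,p+1$, where $L(m)$ is the least nonnegative residue of $m$ modulo $p$. Then $\hom(P(\widetilde{\mathcal{T}(p,2)}),(\mathbb{Z}_n,y,y))=\{\alpha_0,\dots,\alpha_{c-1}\}$, these $c$ homomorphisms are pairwise distinct, and hence the pointed quandle counting invariant is $\Phi^{\mathbb{Z}}_{(\mathbb{Z}_n,y,y)}(\widetilde{\mathcal{T}(p,2)})=|\hom(P(\widetilde{\mathcal{T}(p,2)}),(\mathbb{Z}_n,y,y))|=c$.
   Context: $\mathbb{Z}_n$ is the dihedral quandle ($x\triangleright y=2y-x$ mod $n$); $(\mathbb{Z}_n,y,y)$ is the $2$-pointed quandle with both basepoints $y$. $P(\widetilde{\mathcal{T}(p,2)})=(Q,x_1,x_{p+1})$ with $Q=\langle x_1,\dots,x_{p+1}\mid x_p=x_2\triangleright x_{p+1},\ x_i=x_{i+2}\triangleright x_{i+1}\ (1\le i\le p-1)\rangle$, the fundamental pointed quandle of the $1$-linkoid of $(p,2)$-torus type; $\hom$ denotes basepoint-preserving quandle homomorphisms. *)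

(* Defs.v *)
From mathcomp Require Import all_boot.
Set Implicit Arguments. Unset Strict Implicit. Unset Printing Implicit Defensive.

(* Dihedral quandle Z_n, elements represented by residues 0..n-1 (type 'I_n).
   a |> b := 2 b - a (mod n), computed on residues. *)
Definition dih (n a b : nat) : nat := (2 * b + (n - a %% n)) %% n.

(* Basepoint-preserving quandle homomorphisms
     P(T~(p,2)) = (Q, x_1, x_{p+1})  -->  (Z_n, y, y),
   where Q = < x_1,...,x_{p+1} | x_p = x_2 |> x_{p+1},
                                 x_i = x_{i+2} |> x_{i+1} (1 <= i <= p-1) >.
   By the universal property of a quandle presentation, such a homomorphism is
   exactly an assignment of the generators (x_i is indexed by i-1 : 'I_p.+1)
   into Z_n satisfying the relations, with x_1 |-> y and x_{p+1} |-> y. *)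
Definition torus_pointed_hom (p n y : nat) (f : {ffun 'I_p.+1 -> 'I_n}) : bool :=
  let g (j : nat) := nat_of_ord (f (inord j)) in
  [&& g 0 == y, g p == y,
      g p.-1 == dih n (g 1) (g p)
    & [forall j : 'I_p.-1, g j == dih n (g j.+2) (g j.+1)]].

Definition alpha_val (p n y k d j : nat) : nat := (y + (j %% p) * k * d) %% n.
Arguments torus_pointed_hom : clear implicits.

(* Main.v *)
Require Import Defs.
From mathcomp Require Import all_boot.
From mathcomp Require Import zify.

Lemma dihE n a b x : 0 < n -> x < n ->
  (x == dih n a b) = (x + a == 2 * b %[mod n]).
Proof.
move=> n0 xn.
have dn : dih n a b < n by rewrite /dih ltn_pmod.
have E : (dih n a b + a) %% n = (2 * b) %% n.
  rewrite -modnDmr /dih modnDml -addnA subnK ?modnDr //.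
  by apply: ltnW; rewrite ltn_pmod.
have -> : (x == dih n a b) = (x == dih n a b %[mod n]) by rewrite !modn_small.
by rewrite -(eqn_modDr a) E.
Qed.

Lemma ap_step n y t m g0 g1 g2 : 0 < n -> g2 < n ->
  g0 = (y + m * t) %% n -> g1 = (y + m.+1 * t) %% n ->
  g0 == dih n g2 g1 -> g2 = (y + m.+2 * t) %% n.
Proof.
move=> n0 g2n e0 e1.
have g0n : g0 < n by rewrite e0 ltn_pmod.
rewrite dihE // => /eqP H.
rewrite -(modn_small g2n); apply/eqP; rewrite -(eqn_modDr (y + m * t)).
rewrite -modnDmr -e0 addnC H e1 modnMmr.
have -> : y + m.+2 * t + (y + m * t) = 2 * (y + m.+1 * t) by rewrite !mulSn; lia.
by [].
Qed.

Lemma alphaE p n y k j : (p * (k * (n %/ gcdn p n))) %% n = 0 ->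
  alpha_val p n y k (n %/ gcdn p n) j = (y + j * (k * (n %/ gcdn p n))) %% n.
Proof.
set e := k * _ => He.
rewrite /alpha_val -mulnA -/e.
have -> : j * e = (j %% p) * e + (j %/ p) * (p * e).
  by rewrite {1}(divn_eq j p) mulnDl addnC mulnA.
by rewrite addnA -[in RHS]modnDmr -[in RHS]modnMmr He muln0 mod0n addn0.
Qed.

Lemma pe0 p n k : 0 < p -> 0 < n -> (p * (k * (n %/ gcdn p n))) %% n = 0.
Proof.
move=> p0 n0.
rewrite mulnCA muln_divA ?dvdn_gcdr // -divn_mulAC ?dvdn_gcdl //.
by rewrite mulnA modnMl.
Qed.

Lemma ap_hom p n y e (f : {ffun 'I_p.+1 -> 'I_n}) : 0 < p -> 0 < n -> y < n ->
  (p * e) %% n = 0 ->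
  (forall j, j <= p -> nat_of_ord (f (inord j)) = (y + j * e) %% n) ->
  torus_pointed_hom p n y f.
Proof.
move=> p0 n0 yn pe H.
have gp : nat_of_ord (f (inord p)) = y.
  by rewrite H // -modnDmr pe addn0 modn_small.
apply/and4P; split.
- by rewrite H // mul0n addn0 modn_small.
- by rewrite gp.
- rewrite dihE ?ltn_ord // gp H ?leq_pred // H ?p0 //.
  rewrite modnDm addnACA mul1n -mulSnr prednK // -modnDmr pe addn0.
  by rewrite mul2n -addnn.
- apply/forallP => j.
  have jp : j.+2 <= p by have := ltn_ord j; lia.
  rewrite dihE ?ltn_ord // (H j) ?(H j.+2) ?(H j.+1) ?modnDm ?modnMmr; try lia.
  apply/eqP; congr (_ %% _); rewrite !mulSn; lia.
Qed.

Theorem theorem6p6 (p n : nat) (y : 'I_n) :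
  0 < p -> 0 < n ->
  let c := gcdn p n in
  let d := n %/ c in
  (* hom(P(T~(p,2)), (Z_n,y,y)) = {alpha_0, ..., alpha_{c-1}} *)
  (forall f : {ffun 'I_p.+1 -> 'I_n},
     torus_pointed_hom p n y f <->
     exists2 k, k < c & forall j : 'I_p.+1, nat_of_ord (f j) = alpha_val p n y k d j)
  (* the alpha_k are pairwise distinct *)
  /\ (forall k1 k2, k1 < c -> k2 < c ->
        (forall j : 'I_p.+1, alpha_val p n y k1 d j = alpha_val p n y k2 d j) ->
        k1 = k2)
  (* counting invariant *)
  /\ #|[set f : {ffun 'I_p.+1 -> 'I_n} | torus_pointed_hom p n y f]| = c.
Proof.
move=> p0 n0 c d.
have c0 : 0 < c by rewrite gcdn_gt0 p0.
have ncd : d * c = n by rewrite divnK // dvdn_gcdr.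
have d0 : 0 < d by move: ncd n0; case: (d) => //; rewrite mul0n => <-.
have yn := ltn_ord y.
have P1 : forall f : {ffun 'I_p.+1 -> 'I_n},
     torus_pointed_hom p n y f <->
     exists2 k, k < c & forall j : 'I_p.+1, nat_of_ord (f j) = alpha_val p n y k d j.
  move=> f; split.
  + case/and4P => /eqP g0 /eqP gp _ /forallP Hr.
    set g := fun j => nat_of_ord (f (inord j)).
    set t := (g 1 + n - y) %% n.
    have G : forall m, m.+1 <= p -> g m = (y + m * t) %% n /\ g m.+1 = (y + m.+1 * t) %% n.
      elim=> [|m IH] Hm.
        split; first by rewrite mul0n addn0 modn_small.
        rewrite mul1n modnDmr addnBA; last by apply: leq_trans (ltnW yn) (leq_addl _ _).
        by rewrite addKn modnDr modn_small ?ltn_ord.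
      have [h0 h1] := IH (ltnW Hm).
      split => //.
      apply: (@ap_step n y t m (g m) (g m.+1) (g m.+2) n0 (ltn_ord _) h0 h1).
      have jlt : m < p.-1 by lia.
      exact: (Hr (Ordinal jlt)).
    have Gj : forall j, j <= p -> g j = (y + j * t) %% n.
      case=> [|j] Hj; first by case: (G 0 p0).
      by case: (G j Hj).
    have pt : n %| p * t.
      move: gp; rewrite -/(g p) Gj // => /eqP.
      move=> /eqP H; have : (y + p * t) %% n == (y + 0) %% n by rewrite addn0 H modn_small.
      rewrite eqn_modDl mod0n.
      by [].
    have dt : d %| t.
      have : n %| c * t by rewrite /c muln_gcdl dvdn_gcd pt dvdn_mulr.
      by rewrite -ncd (mulnC c) dvdn_pmul2r.
    exists (t %/ d).
      by rewrite ltn_divLR // mulnC ncd /t ltn_pmod.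
    move=> j.
    rewrite /d alphaE ?pe0 // -/d mulnC divnK //.
    by rewrite mulnC -Gj ?leq_ord -?ltnS // /g inord_val.
  + case=> k kc Hk.
    apply: (@ap_hom _ _ _ (k * d)) => //; first exact: pe0.
    move=> j jp.
    by rewrite Hk /d alphaE ?pe0 // inordK.
have P2 : forall k1 k2, k1 < c -> k2 < c ->
        (forall j : 'I_p.+1, alpha_val p n y k1 d j = alpha_val p n y k2 d j) ->
        k1 = k2.
  move=> k1 k2 k1c k2c H.
  have := H (inord 1).
  rewrite /d !alphaE ?pe0 // -/d inordK // !mul1n.
  move/eqP; rewrite eqn_modDl !modn_small.
  + by move/eqP/eqP; rewrite eqn_pmul2r // => /eqP.
  + by rewrite -ncd mulnC ltn_pmul2l.
  + by rewrite -ncd mulnC ltn_pmul2l.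
split => //; split => //.
pose F (k : 'I_c) : {ffun 'I_p.+1 -> 'I_n} :=
  [ffun j : 'I_p.+1 => Ordinal (ltn_pmod (alpha_val p n y k d j) n0)].
have -> : [set f : {ffun 'I_p.+1 -> 'I_n} | torus_pointed_hom p n y f] = F @: setT.
  apply/setP => f; rewrite inE; apply/idP/imsetP.
  + case/P1 => k kc Hk; exists (Ordinal kc) => //.
    by apply/ffunP => j; apply: val_inj; rewrite /F ffunE /= Hk /alpha_val modn_mod.
  + case=> k _ ->; apply/P1; exists k => //.
    by move=> j; rewrite /F ffunE /= /alpha_val modn_mod.
rewrite card_imset ?cardsT ?card_ord //.
move=> k1 k2 E; apply: val_inj; apply: P2; [exact: ltn_ord | exact: ltn_ord |].
move=> j; have := congr1 (fun g : {ffun _ -> _} => nat_of_ord (g j)) E.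
rewrite /= /F !ffunE /=. by rewrite /alpha_val !modn_mod.
Qed.
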